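(* Let $\mathcal{H}$ be a real Hilbert space and let $\phi:\mathcal{H}\to(-\infty,+\infty]$ be a function such that $\phi+\tfrac12\|\cdot\|^2\in\Gamma_0(\mathcal{H})$. Then for every $\delta>0$, the proximity operator of the $(\delta+1)^{-1}$-weakly convex function $\phi/(\delta+1)$ is single-valued and $$\mathrm{s\text{-}Prox}_{\phi/(\delta+1)}=\big[\mathbf{Prox}_{\phi}^{-1}+\delta\,\mathrm{Id}\big]^{-1}\circ(\delta+1)\mathrm{Id}.$$
   Context: $\Gamma_0(\mathcal{H})$ is the set of proper lower semicontinuous convex functions $\mathcal{H}\to(-\infty,+\infty]$. $\mathrm{Id}$ is the identity on $\mathcal{H}$. For a proper function $g$ and $\gamma>0$, $\mathbf{Prox}_{\gamma g}:\mathcal{H}\to2^{\mathcal{H}}$, $x\mapsto\operatorname{argmin}_{y\in\mathcal{H}}\big(g(y)+\frac{1}{2\gamma}\|x-y\|^2\big)$; when this set is a singleton for every $x$, the resulting single-valued map $\mathcal{H}\to\mathcal{H}$ is denoted $\mathrm{s\text{-}Prox}_{\gamma g}$. The inverse of a set-valued operator $\mathsf{T}$ is $\mathsf{T}^{-1}(y)=\{x\in\mathcal{H}: y\in\mathsf{T}(x)\}$, and the sum of set-valued operators is $(\mathsf{T}+\delta\mathrm{Id})(x)=\{u+\delta x: u\in\mathsf{T}(x)\}$. *)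

(* Defs.v *)
From HB Require Import structures.
From mathcomp Require Import all_boot all_order all_algebra.
From mathcomp Require Import all_classical all_reals all_analysis.
Set Implicit Arguments. Unset Strict Implicit. Unset Printing Implicit Defensive.
Import Order.TTheory GRing.Theory Num.Theory.
Import numFieldNormedType.Exports.
Local Open Scope classical_set_scope.
Local Open Scope ring_scope.

(* The norm of the normed module H is induced by the real inner product ip.
   Together with completeness (completeNormedModType) this makes H a real
   Hilbert space. *)
Definition is_inner_product {R : realType} {H : normedModType R}
  (ip : H -> H -> R) : Prop :=
  (forall x y, ip x y = ip y x) /\
  (forall (a : R) (x y z : H), ip (a *: x + y) z = a * ip x z + ip y z) /\
  (forall x, `|x| ^+ 2 = ip x x).

Definition convex_ext {R : realType} {H : normedModType R}
  (f : H -> \bar R) : Prop :=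
  forall (x y : H) (t : R), 0 < t < 1 ->
    (f (t *: x + (1 - t) *: y)%R <= t%:E * f x + (1 - t)%:E * f y)%E.

Definition proper_ext {R : realType} {H : normedModType R}
  (f : H -> \bar R) : Prop :=
  (forall x, f x != -oo%E) /\ (exists x, f x != +oo%E).

Definition Gamma0 {R : realType} {H : normedModType R}
  (f : H -> \bar R) : Prop :=
  proper_ext f /\ lower_semicontinuous f /\ convex_ext f.

Definition Prox {R : realType} {H : normedModType R}
  (gamma : R) (g : H -> \bar R) (x : H) : set H :=
  [set y | forall z : H,
     (g y + ((2 * gamma)^-1 * `|x - y| ^+ 2)%:E
      <= g z + ((2 * gamma)^-1 * `|x - z| ^+ 2)%:E)%E].

Definition op_inv {H : Type} (T : H -> set H) : H -> set H :=
  fun y => [set x | T x y].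

Definition op_add_scaled_id {R : realType} {H : normedModType R}
  (T : H -> set H) (delta : R) : H -> set H :=
  fun x => [set u + delta *: x | u in T x].

(* Main.v *)
Require Import Defs.
From HB Require Import structures.
From mathcomp Require Import all_boot all_order all_algebra.
From mathcomp Require Import all_classical all_reals all_analysis.
From mathcomp Require Import ring lra.
Import Order.TTheory GRing.Theory Num.Theory.
Import numFieldNormedType.Exports.
Local Open Scope classical_set_scope.
Local Open Scope ring_scope.
Set Implicit Arguments. Unset Strict Implicit.
Ltac nz := repeat match goal with |- is_true (_ && _) => apply/andP; split end;
  try (by apply: lt0r_neq0); try (by apply: ltr0_neq0); try (apply/eqP => ?; lra).

Lemma lb_arith (R : realType) (d r D G0 Gy : R) : 0 < d -> 0 < r -> r <= D ->
  G0 - 1 < r / (2 * D) * Gy + (1 - r / (2 * D)) * G0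
           - d / 2 * (r / (2 * D) * (1 - r / (2 * D))) * D ^+ 2 ->
  G0 - 1 - 4 / (d * r ^+ 2) <= Gy.
Proof.
move=> d0 r0 Dge h.
have D0 : 0 < D by lra.
set t := r / (2 * D) in h.
have t0 : 0 < t by apply: divr_gt0 => //; lra.
have t12 : t <= 1 / 2 by rewrite /t ler_pdivrMr; [rewrite mul1r; lra | lra].
have tD : t * D = r / 2.
  by rewrite /t; field; nz.
have k1 : d * r * D / 8 <= d / 2 * (t * (1 - t)) * D ^+ 2.
  have -> : d / 2 * (t * (1 - t)) * D ^+ 2 = d / 2 * (t * D) * ((1 - t) * D) by ring.
  rewrite tD -subr_ge0.
  have -> : d / 2 * (r / 2) * ((1 - t) * D) - d * r * D / 8 = (d * r * D) * (1 / 2 - t) / 4 by field.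
  apply: mulr_ge0; last by lra.
  apply: mulr_ge0; last by lra.
  apply: mulr_ge0; [apply: mulr_ge0|]; lra.
have k2 : -1 + d * r * D / 8 < t * (Gy - G0) by lra.
have k3 : - 2 * D / r + d * D ^+ 2 / 4 < Gy - G0.
  have p : 0 < 2 * D / r by apply: divr_gt0 => //; lra.
  rewrite -(ltr_pM2l p) in k2.
  have -> : - 2 * D / r + d * D ^+ 2 / 4 = 2 * D / r * (-1 + d * r * D / 8) by field; nz.
  have -> : Gy - G0 = 2 * D / r * (t * (Gy - G0)) by rewrite /t; field; nz.
  exact: k2.
have k4 : 0 <= d / 4 * (D - 4 / (d * r)) ^+ 2 by apply: mulr_ge0; [lra|exact: sqr_ge0].
have k5 : d / 4 * (D - 4 / (d * r)) ^+ 2 = d * D ^+ 2 / 4 - 2 * D / r + 4 / (d * r ^+ 2).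
  by field; nz.
lra.
Qed.

Lemma inv_lt (R : realType) (x : R) n : 0 < x -> (Num.Def.trunc (x^-1) <= n)%N ->
  n.+1%:R^-1 < x.
Proof.
move=> x0 hn; have h1 := truncnS_gt (x^-1).
have h2 : (Num.Def.trunc x^-1).+1%:R <= n.+1%:R :> R by rewrite ler_nat ltnS.
rewrite -[x]invrK ltf_pV2 ?posrE ?invr_gt0 ?ltr0Sn //.
exact: lt_le_trans h1 h2.
Qed.

Lemma inv_le (R : realType) n N : (N <= n)%N -> n.+1%:R^-1 <= N.+1%:R^-1 :> R.
Proof. by move=> h; rewrite lef_pV2 ?posrE ?ltr0Sn // ler_nat ltnS. Qed.

Lemma lin4 (R : realType) (X Y u v a b m : R) : X <= (a + b) / 2 - m -> a < m + u ->
  b < m + v -> v <= u -> u < Y -> X < Y.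
Proof. move=> *; lra. Qed.

Lemma lin5 (R : realType) (a r m u v : R) : a < r -> r < m + v -> v <= u -> u < a - m -> False.
Proof. move=> *; lra. Qed.

Lemma quad_arith (R : realType) (d e Gy Gz N : R) : 0 < d -> 0 < e -> 0 <= N ->
  (forall t, 0 < t < 1 -> Gy <= t * Gz + (1 - t) * Gy - d / 2 * (t * (1 - t)) * N) ->
  Gy + d / 2 * N <= Gz + e.
Proof.
move=> d0 e0 N0 Ht.
have K0 : 0 <= d / 2 * N by apply: mulr_ge0 => //; lra.
set K := d / 2 * N in K0 *.
pose t := e / (e + K + 1).
have t0 : 0 < t by apply: divr_gt0 => //; lra.
have t1 : t < 1 by rewrite /t ltr_pdivrMr; lra.
have h := Ht t (ltac:(apply/andP; split => //)).
have h1 : t * (Gy + K - Gz - t * K) <= 0.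
  have -> : t * (Gy + K - Gz - t * K) = t * Gy + t * K - t * Gz - t * t * K by ring.
  move: h; rewrite /K.
  have -> : d / 2 * (t * (1 - t)) * N = t * (d / 2 * N) - t * t * (d / 2 * N) by ring.
  lra.
have h2 : Gy + K - Gz - t * K <= 0 by rewrite -(pmulr_rle0 _ t0).
have h3 : t * K <= e.
  rewrite /t mulrAC ler_pdivrMr; last by lra.
  nra.
lra.
Qed.

Lemma sq0_arith (R : realType) (d G1 G2 n : R) : 0 < d ->
  G1 + d / 2 * n ^+ 2 <= G2 -> G2 <= G1 -> n ^+ 2 <= 0.
Proof.
move=> d0 h1 h2.
have : d / 2 * n ^+ 2 <= 0 by lra.
by rewrite pmulr_rle0 //; lra.
Qed.
Section IP.
Variables (R : realType) (H : normedModType R) (ip : H -> H -> R).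
Hypothesis Hip : is_inner_product ip.

Lemma ipC x y : ip x y = ip y x. Proof. by case: Hip. Qed.
Lemma ipL a x y z : ip (a *: x + y) z = a * ip x z + ip y z.
Proof. by case: Hip => _ []. Qed.
Lemma nip x : `|x| ^+ 2 = ip x x. Proof. by case: Hip => _ []. Qed.
Lemma ip0l z : ip 0 z = 0.
Proof.
have := ipL 1 0 0 z; rewrite scaler0 addr0 mul1r => /eqP.
by rewrite -subr_eq0 opprD addrA subrr sub0r oppr_eq0 => /eqP.
Qed.
Lemma ipZl a x z : ip (a *: x) z = a * ip x z.
Proof. by rewrite -[a *: x]addr0 ipL ip0l addr0. Qed.
Lemma ipDl x y z : ip (x + y) z = ip x z + ip y z.
Proof. by rewrite -[x]scale1r ipL mul1r scale1r. Qed.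
Lemma ipNl x z : ip (- x) z = - ip x z.
Proof. by rewrite -scaleN1r ipZl mulN1r. Qed.
Lemma ipBl x y z : ip (x - y) z = ip x z - ip y z.
Proof. by rewrite ipDl ipNl. Qed.
Lemma ipZr a x z : ip z (a *: x) = a * ip z x.
Proof. by rewrite ipC ipZl ipC. Qed.
Lemma ipDr x y z : ip z (x + y) = ip z x + ip z y.
Proof. by rewrite ipC ipDl !(ipC z). Qed.
Lemma ipNr x z : ip z (- x) = - ip z x.
Proof. by rewrite ipC ipNl ipC. Qed.
Lemma ipBr x y z : ip z (x - y) = ip z x - ip z y.
Proof. by rewrite ipDr ipNr. Qed.

Definition ipE := (ipDl, ipDr, ipNl, ipNr, ipZl, ipZr).

Lemma test (a b : H) (t : R) :
  `|t *: a + (1 - t) *: b| ^+ 2 = t * `|a|^+2 + (1 - t) * `|b|^+2 - t * (1 - t) * `|a - b|^+2.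
Proof. rewrite !nip !ipE (ipC b a); ring. Qed.
End IP.
Lemma mulyr_pos (R : realType) (r : R) : 0 < r -> (+oo * r%:E)%E = +oo%E.
Proof. by move=> r0; rewrite mulyr gtr0_sg // mul1e. Qed.

Lemma sq_lt (R : realType) (a b : R) : 0 <= a -> 0 <= b -> a ^+ 2 < b ^+ 2 -> a < b.
Proof.
move=> a0 b0 h; rewrite ltNge; apply/negP => hb.
have := lerXn2r 2 b0 a0 hb; by rewrite leNgt h.
Qed.

Section Main.
Variables (R : realType) (H : completeNormedModType R) (ip : H -> H -> R).
Hypothesis Hip : is_inner_product ip.
Variables (phi : H -> \bar R).
Hypothesis phi_ninfty : forall z, phi z != -oo%E.
Local Notation psi := (fun z => (phi z + (2^-1 * `|z| ^+ 2)%:E)%E).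
Hypothesis Hconv : convex_ext psi.
Hypothesis Hlsc : lower_semicontinuous psi.
Hypothesis Hdom : exists z0, psi z0 != +oo%E.
Variables (d : R) (x : H).
Hypothesis d0 : 0 < d.
Local Notation c := (d + 1).

Definition g z := (phi z + ((c / 2) * `|x - z| ^+ 2)%:E)%E.
Definition q z := c / 2 * (`|x - z| * `|x - z|) - 2^-1 * (`|z| * `|z|).

Lemma gE z : g z = (psi z + (q z)%:E)%E.
Proof. by rewrite /g -addeA -EFinD /q !expr2; congr (_ + _%:E)%E; ring. Qed.

Lemma g_ninfty z : g z != -oo%E.
Proof. by rewrite /g; case: (phi z) (phi_ninfty z). Qed.

Lemma psi_fin z G : g z = G%:E -> psi z = (G - q z)%:E.
Proof.
rewrite gE; case: (psi z) => [p| |] //= [<-]; congr (_%:E); ring.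
Qed.

Lemma qc z0 : {for z0, continuous q}.
Proof.
have h1 : {for z0, continuous (fun z : H => x - z)}.
  apply: (@cvgB _ _ _ _ _ (fun=> x) id); [exact: cvg_cst | exact: cvg_id].
have n1 : {for z0, continuous (fun z : H => `|x - z|)}.
  exact: (@continuous_comp _ _ _ (fun z : H => x - z) (@Num.Def.normr R H) z0 h1 (@norm_continuous _ _ _)).
have n2 : {for z0, continuous (fun z : H => `|z|)} by exact: norm_continuous.
rewrite /q.
apply: cvgB; apply: cvgM => //; try exact: cvg_cst; exact: cvgM.
Qed.

Lemma g_strong a b t A B : 0 < t < 1 -> g a = A%:E -> g b = B%:E ->
  (g (t *: a + (1 - t) *: b)%R <=
     (t * A + (1 - t) * B - d / 2 * (t * (1 - t)) * `|a - b| ^+ 2)%:E)%E.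
Proof.
move=> t01 ga gb; have Ha := psi_fin ga; have Hb := psi_fin gb.
have := Hconv a b t01; rewrite Ha Hb -!EFinM -EFinD => Hc.
rewrite gE; apply: le_trans; first exact: (leeD2r _ Hc).
rewrite -EFinD lee_fin /q -!expr2 !(nip Hip) !(ipE Hip).
rewrite ?(ipC Hip b a) ?(ipC Hip a x) ?(ipC Hip b x).
rewrite le_eqVlt; apply/orP; left; apply/eqP; ring.
Qed.

Lemma g_lsc : lower_semicontinuous g.
Proof.
move=> x0 a ha.
have [b [e [e0 [hb hbe]]]] :
    exists b e, 0 < e /\ (b%:E < psi x0)%E /\ a <= b + q x0 - e.
  move: ha; rewrite gE; case E: (psi x0) => [P| |] //=.
  - rewrite -EFinD lte_fin => h.
    exists (P - (P + q x0 - a) / 2), ((P + q x0 - a) / 2).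
    split; [lra|split; [rewrite lte_fin; lra | lra]].
  - move=> _; exists (a - q x0 + 1), 1; split => //; split; [exact: ltry | lra].
have [V nV HV] := Hlsc hb.
have nq : nbhs x0 [set y | q x0 - e < q y].
  have := @qc x0; move/cvgrPdist_lt => /(_ e e0); apply: filterS => y /= h.
  have := ler_norm (q x0 - q y); lra.
exists (V `&` [set y | q x0 - e < q y]); first exact: filterI.
move=> y [Vy /= qy]; rewrite gE /=; have := HV y Vy.
case: (phi y + (2^-1 * `|y| ^+ 2)%:E)%E => [P| |] //=.
- rewrite -EFinD !lte_fin => h; lra.
- by move=> _; rewrite addye //; exact: ltry.
Qed.

Lemma g_lb : exists L, forall z, (L%:E <= g z)%E.
Proof.
case: Hdom => z0 hz0.
have [G0 g0E] : exists G0, g z0 = G0%:E.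
  rewrite /g; move: hz0 (phi_ninfty z0) => /=; case: (phi z0) => [p| |] //= _ _.
  by eexists.
have gg : ((G0 - 1)%:E < g z0)%E by rewrite g0E lte_fin; lra.
have [V nV HV] := @g_lsc z0 (G0 - 1) gg.
case/nbhs_ballP: nV => r /= r0 Hr.
have h4 : 0 <= 4 / (d * r ^+ 2) by apply: divr_ge0 => //; apply: mulr_ge0; [exact: ltW|exact: sqr_ge0].
exists (G0 - 1 - 4 / (d * r ^+ 2)) => y.
case E: (g y) => [Gy| |]; [| by rewrite leey | by move: (g_ninfty y); rewrite E].
rewrite lee_fin.
set D := `|y - z0|.
have [Dlt|Dge] := ltP D r.
  have : ball z0 r y by rewrite -ball_normE /= distrC.
  by move/Hr/HV; rewrite E lte_fin => h; lra.
have D0 : 0 < D by lra.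
set t := r / (2 * D).
have t0 : 0 < t by apply: divr_gt0 => //; lra.
have t12 : t <= 1 / 2 by rewrite /t ler_pdivrMr; [rewrite mul1r; lra | lra].
have t01 : 0 < t < 1 by apply/andP; split => //; lra.
have tD : t * D = r / 2 by rewrite /t; field; nz.
have hz : ball z0 r (t *: y + (1 - t) *: z0).
  rewrite -ball_normE /=.
  have e2 : `|z0 - (t *: y + (1 - t) *: z0)| ^+ 2 = (t * D) ^+ 2.
    rewrite exprMn /D !(nip Hip) !(ipE Hip) ?(ipC Hip y z0); ring.
  apply: sq_lt => //; first by lra.
  by rewrite e2 tD; nra.
have := HV _ (Hr _ hz).
have := g_strong t01 E g0E.
rewrite -/D => h1 h2; have := lt_le_trans h2 h1; rewrite lte_fin => h.
exact: lb_arith Dge h.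
Qed.

Lemma g_dom : exists z0 G0, g z0 = G0%:E.
Proof.
case: Hdom => z0 hz0; exists z0.
rewrite /g; move: hz0 (phi_ninfty z0) => /=; case: (phi z0) => [p| |] //= _ _.
by eexists.
Qed.

Lemma mid_bound m a b ra rb : (forall z, (m%:E <= g z)%E) ->
  g a = ra%:E -> g b = rb%:E -> d / 8 * `|a - b| ^+ 2 <= (ra + rb) / 2 - m.
Proof.
move=> mlb ga gb.
have t01 : 0 < (2^-1 : R) < 1 by apply/andP; split; lra.
have := g_strong t01 ga gb; have := mlb (2^-1 *: a + (1 - 2^-1) *: b).
move=> h1 h2; have := le_trans h1 h2; rewrite lee_fin => h.
lra.
Qed.

Lemma g_min : exists y, forall z, (g y <= g z)%E.
Proof.
have [L HL] := g_lb.
have [z0 [G0 g0E]] := g_dom.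
pose S := [set r : R | exists z, g z = r%:E].
have hS : has_inf S.
  split; first by exists G0, z0.
  exists L => r /= [z gz]; have := HL z; by rewrite gz lee_fin.
pose m := inf S.
have mlb : forall z, (m%:E <= g z)%E.
  move=> z; case E: (g z) => [r| |].
  - by rewrite lee_fin; apply: (ge_inf hS.2); exists z.
  - exact: leey.
  - by have := g_ninfty z; rewrite E.
have sq : forall n : nat, exists zr : H * R, g zr.1 = zr.2%:E /\ zr.2 < m + n.+1%:R^-1.
  move=> n; have [r [z gz] hr] := @inf_adherent _ S (n.+1%:R^-1) ltac:(by rewrite invr_gt0 ltr0Sn) hS.
  by exists (z, r).
pose y n := (projT1 (cid (sq n))).1.
pose r n := (projT1 (cid (sq n))).2.
have hy : forall n, g (y n) = (r n)%:E /\ r n < m + n.+1%:R^-1.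
  by move=> n; exact: (projT2 (cid (sq n))).
have cy : cauchy_ex (y @ \oo).
  move=> e e0.
  pose N := Num.Def.trunc ((d * e ^+ 2 / 8)^-1).
  exists (y N); exists N => // n /= hn.
  rewrite -ball_normE /=.
  have hb := mid_bound mlb (hy N).1 (hy n).1.
  have h1 := (hy N).2; have h2 := (hy n).2.
  have h3 := inv_le R hn.
  have de : 0 < d * e ^+ 2 / 8 by apply: divr_gt0 => //; apply: mulr_gt0 => //; exact: exprn_gt0.
  have h4 := inv_lt de (leqnn N).
  apply: sq_lt => //; first exact: ltW.
  have : d / 8 * `|y N - y n| ^+ 2 < d / 8 * e ^+ 2.
    have -> : d / 8 * e ^+ 2 = d * e ^+ 2 / 8 by rewrite mulrAC.
    exact: lin4 hb h1 h2 h3 h4.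
  by rewrite ltr_pM2l // divr_gt0.
have cv : cvg (y @ \oo) by apply: cauchy_cvg; exact: (cauchy_exP _ cy).
exists (lim (y @ \oo)) => z; apply: le_trans (mlb z).
rewrite leNgt; apply/negP => Hlt.
have [a [ma ha]] : exists a, m < a /\ (a%:E < g (lim (y @ \oo)))%E.
  move: Hlt; case: (g (lim (y @ \oo))) => [G| |] //.
  - rewrite lte_fin => h; exists ((m + G) / 2); rewrite lte_fin; split; lra.
  - by move=> _; exists (m + 1); split; [lra | exact: ltry].
have [V nV HV] := g_lsc ha.
have ev1 : \forall n \near \oo, V (y n) := cv _ nV.
pose N := Num.Def.trunc ((a - m)^-1).
have ev2 := nbhs_infty_ge N.
have [n [Vn Nn]] := filter_ex (filterI ev1 ev2).
have := HV _ Vn; rewrite (hy n).1 lte_fin => h.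
have h2 := (hy n).2.
have h3 := inv_le R Nn.
have h4 := inv_lt (ltac:(lra) : 0 < a - m) (leqnn N).
exact: (lin5 h h2 h3 h4).
Qed.

Lemma g_val y : (forall z, (g y <= g z)%E) -> exists Gy, g y = Gy%:E.
Proof.
move=> hy; have [z0 [G0 g0E]] := g_dom; have := hy z0; rewrite g0E.
have := g_ninfty y; case: (g y) => [r| |] //= _ _; by exists r.
Qed.

Lemma g_quad y : (forall z, (g y <= g z)%E) ->
  forall z, (g y + (d / 2 * `|y - z| ^+ 2)%:E <= g z)%E.
Proof.
move=> hy z; have [Gy gy] := g_val hy; rewrite gy.
case E: (g z) => [Gz| |]; [| by rewrite leey | by have := g_ninfty z; rewrite E].
rewrite -EFinD lee_fin; apply/ler_addgt0Pr => e e0.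
apply: (quad_arith d0 e0 (sqr_ge0 _)) => t t01.
have := g_strong t01 E gy; have := hy (t *: z + (1 - t) *: y).
move=> h1 h2; have := le_trans h1 h2; rewrite gy lee_fin (distrC z y).
by [].
Qed.

Lemma g_uniq y1 y2 : (forall z, (g y1 <= g z)%E) -> (forall z, (g y2 <= g z)%E) -> y1 = y2.
Proof.
move=> h1 h2; have := g_quad h1 y2; have := h2 y1.
have [G1 e1] := g_val h1; have [G2 e2] := g_val h2; rewrite e1 e2 -EFinD !lee_fin => a b.
have := sq0_arith d0 b a => h.
have : `|y1 - y2| ^+ 2 = 0 by apply/le_anti; rewrite h sqr_ge0.
by move/eqP; rewrite sqrf_eq0 normr_eq0 subr_eq0 => /eqP.
Qed.

Lemma c_gt0 : 0 < c. Proof. by apply: addr_gt0. Qed.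

Lemma pw1 y z :
  (phi y * (c^-1)%:E + ((2 * 1)^-1 * `|x - y| ^+ 2)%:E <=
   phi z * (c^-1)%:E + ((2 * 1)^-1 * `|x - z| ^+ 2)%:E)%E = (g y <= g z)%E.
Proof.
have ci : 0 < c^-1 by rewrite invr_gt0 c_gt0.
rewrite /g; case: (phi y) (phi_ninfty y) => [py| |] // _;
  case: (phi z) (phi_ninfty z) => [pz| |] // _.
- rewrite -!EFinM -!EFinD !lee_fin.
  have cn : c != 0 by apply: lt0r_neq0; exact: c_gt0.
  have E1 : py + c / 2 * `|x - y| ^+ 2 = c * (py * c^-1 + (2 * 1)^-1 * `|x - y| ^+ 2) by field.
  have E2 : pz + c / 2 * `|x - z| ^+ 2 = c * (pz * c^-1 + (2 * 1)^-1 * `|x - z| ^+ 2) by field.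
  by rewrite E1 E2 ler_pM2l ?c_gt0.
- by rewrite mulyr_pos // !addye // !leey.
- by rewrite mulyr_pos // !addye // -!EFinM -!EFinD !leye_eq.
- by rewrite mulyr_pos // !addye.
Qed.

Lemma pw2 y z :
  (phi y + ((2 * 1)^-1 * `|c *: x - d *: y - y| ^+ 2)%:E <=
   phi z + ((2 * 1)^-1 * `|c *: x - d *: y - z| ^+ 2)%:E)%E =
  (g y + (d / 2 * `|y - z| ^+ 2)%:E <= g z)%E.
Proof.
rewrite /g; case: (phi y) (phi_ninfty y) => [py| |] // _;
  case: (phi z) (phi_ninfty z) => [pz| |] // _.
- rewrite -!EFinD !lee_fin.
  have key : (pz + (2 * 1)^-1 * `|c *: x - d *: y - z| ^+ 2) -
             (py + (2 * 1)^-1 * `|c *: x - d *: y - y| ^+ 2) =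
             (pz + c / 2 * `|x - z| ^+ 2) -
             (py + c / 2 * `|x - y| ^+ 2 + d / 2 * `|y - z| ^+ 2).
    rewrite !(nip Hip) !(ipE Hip) ?(ipC Hip y x) ?(ipC Hip z x) ?(ipC Hip z y).
    by rewrite mulr1; field.
  apply/idP/idP => h.
  + by rewrite -subr_ge0 -key subr_ge0.
  + by rewrite -subr_ge0 key subr_ge0.
all: try by rewrite !addye // !leey.
all: try by rewrite !addye // -!EFinD !leye_eq.
all: try by rewrite !addye.
Qed.
End Main.
Unset Implicit Arguments. Set Strict Implicit.

Theorem theorem2 (R : realType) (H : completeNormedModType R)
  (ip : H -> H -> R) (Hip : is_inner_product ip)
  (phi : H -> \bar R) (phi_ninfty : forall x, phi x != -oo%E)
  (Hphi : Gamma0 (fun x => (phi x + (2^-1 * `|x| ^+ 2)%:E)%E)) :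
  forall delta : R, 0 < delta ->
  forall x : H, exists y : H,
    Prox 1 (fun z => (phi z * ((delta + 1)^-1)%:E)%E) x = [set y] /\
    op_inv (op_add_scaled_id (op_inv (Prox 1 phi)) delta)
      ((delta + 1) *: x) = [set y].
Proof.
move=> d d0 x.
case: Hphi => [[_ Hdom] [Hlsc Hconv]].
have [y hy] := g_min Hip phi_ninfty Hconv Hlsc Hdom x d0.
exists y; split.
- apply/seteqP; split => y' /=.
  + move=> h.
    have h' : forall z, (g phi d x y' <= g phi d x z)%E.
      by move=> z; rewrite -(pw1 phi_ninfty x d0); exact: h.
    exact: (g_uniq Hip phi_ninfty Hconv Hdom d0 h' hy).
  + move=> -> z; rewrite (pw1 phi_ninfty x d0); exact: hy.
- apply/seteqP; split => y' /=.
  + rewrite /op_inv /op_add_scaled_id /=; case => u hu eu.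
    have ue : u = (d + 1) *: x - d *: y' by rewrite -eu addrK.
    rewrite ue in hu.
    have h' : forall z, (g phi d x y' <= g phi d x z)%E.
      move=> z; have := hu z; rewrite (pw2 Hip phi_ninfty d x) => hz.
      apply: le_trans hz; apply: leeDl; rewrite lee_fin.
      by apply: mulr_ge0; [lra | exact: sqr_ge0].
    exact: (g_uniq Hip phi_ninfty Hconv Hdom d0 h' hy).
  + move=> ->; rewrite /op_inv /op_add_scaled_id /=.
    exists ((d + 1) *: x - d *: y); last by rewrite subrK.
    move=> z; rewrite (pw2 Hip phi_ninfty d x).
    exact: (g_quad Hip phi_ninfty Hconv Hdom d0 hy).
Qed.
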